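(* Let $(W,S)$ be a finitely generated Coxeter system and $u<v$ in $W$. The number of elements $u'$ covering $u$ in the interval $[u,v]$ equals $|\mathrm{Des}(v^{S(u)})|$.
   Context: $(W,S)$ is a finitely generated Coxeter system with length function $\ell$. For $w\in W$, $S(w)\subseteq S$ is the set of simple reflections appearing in a (any) reduced expression of $w$, and $\mathrm{Des}(w)=\{s\in S:\ell(ws)<\ell(w)\}$. For $I\subseteq S$, $W_I$ is the parabolic subgroup generated by $I$, $X_I=\{u\in W:\ell(us)>\ell(u)\ \forall s\in I\}$, and every $w\in W$ factors uniquely as $w=w^Iw_I$ with $w^I\in X_I$, $w_I\in W_I$ (parabolic components along $I$). The partial order on $W$: $u\le v$ iff $v_{S(u)}=u$. *)

(* Defs.v *)
From mathcomp Require Import ssreflect ssrfun ssrbool eqtype ssrnat seq choice fintype finset.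
From Stdlib Require Import ClassicalEpsilon.
From Stdlib Require List.

Set Implicit Arguments.
Unset Strict Implicit.
Unset Printing Implicit Defensive.

Fixpoint gpow (G : Type) (mul : G -> G -> G) (one : G) (x : G) (n : nat) : G :=
  match n with 0 => one | n'.+1 => mul x (gpow mul one x n') end.

Definition is_group (G : Type) (mul : G -> G -> G) (one : G) (inv : G -> G) :=
  [/\ forall x y z, mul x (mul y z) = mul (mul x y) z,
      forall x, mul one x = x, forall x, mul x one = x,
      forall x, mul (inv x) x = one & forall x, mul x (inv x) = one].

(* A finitely generated Coxeter system (W,S): W is a group, S a finite
   index set of generators gen s, m a Coxeter matrix (m s t = 0 encodes
   m(s,t) = infinity), and W is presented by <S | (st)^{m(s,t)} = 1>,
   expressed through generation plus the universal property of the
   presentation. *)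
Record coxeter_system := CoxeterSystem {
  cW : Type;
  cmul : cW -> cW -> cW;
  cone : cW;
  cinv : cW -> cW;
  cW_group : is_group cmul cone cinv;
  cS : finType;
  cgen : cS -> cW;
  cm : cS -> cS -> nat;
  cm_diag : forall s, cm s s = 1;
  cm_sym : forall s t, cm s t = cm t s;
  cm_off : forall s t, s != t -> cm s t != 1;
  crel : forall s t, 0 < cm s t -> gpow cmul cone (cmul (cgen s) (cgen t)) (cm s t) = cone;
  cgenerated : forall w : cW, exists l : seq cS,
      w = foldr (fun s x => cmul (cgen s) x) cone l;
  cuniversal : forall (G : Type) (gm : G -> G -> G) (g1 : G) (gi : G -> G),
      is_group gm g1 gi -> forall f : cS -> G,
      (forall s t, 0 < cm s t -> gpow gm g1 (gm (f s) (f t)) (cm s t) = g1) ->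
      exists h : cW -> G, (forall x y, h (cmul x y) = gm (h x) (h y)) /\
                          (forall s, h (cgen s) = f s)
}.

Section Coxeter.
Variable C : coxeter_system.
Local Notation W := (cW C).
Local Notation S := (cS C).
Local Notation "x * y" := (cmul x y).

Definition wprod (l : seq S) : W := foldr (fun s x => cgen s * x) (cone C) l.

Definition is_length (w : W) (n : nat) : Prop :=
  (exists l : seq S, size l = n /\ wprod l = w) /\
  (forall l : seq S, wprod l = w -> n <= size l).

Definition ell (w : W) : nat := epsilon (inhabits 0) (is_length w).

Definition reduced_expr (w : W) (l : seq S) : Prop := wprod l = w /\ size l = ell w.

Definition supp (w : W) : S -> Prop :=
  fun s => exists l, reduced_expr w l /\ s \in l.

Definition Des (w : W) : {set S} := [set s | ell (w * cgen s) < ell w].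

Definition in_WI (I : S -> Prop) (w : W) : Prop :=
  exists l : seq S, (forall s, s \in l -> I s) /\ wprod l = w.

Definition in_XI (I : S -> Prop) (u : W) : Prop :=
  forall s, I s -> ell u < ell (u * cgen s).

Definition par_decomp (I : S -> Prop) (w : W) (p : W * W) : Prop :=
  [/\ in_XI I p.1, in_WI I p.2 & w = p.1 * p.2].

Definition par_comp (I : S -> Prop) (w : W) : W * W :=
  epsilon (inhabits (cone C, cone C)) (par_decomp I w).

Definition wup (I : S -> Prop) (w : W) : W := (par_comp I w).1.
Definition wlo (I : S -> Prop) (w : W) : W := (par_comp I w).2.

Definition cle (u v : W) : Prop := wlo (supp u) v = u.
Definition clt (u v : W) : Prop := cle u v /\ u <> v.

Definition covers_in (u v u' : W) : Prop :=
  clt u u' /\ cle u' v /\ ~ (exists z, clt u z /\ clt z u').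

End Coxeter.

(* Main.v *)
Require Import Defs.
From mathcomp Require Import ssreflect ssrfun ssrbool eqtype ssrnat seq choice fintype finset.
From Stdlib Require Import ClassicalEpsilon Classical ProofIrrelevance FunctionalExtensionality.
From Stdlib Require List.
Set Implicit Arguments.
Unset Strict Implicit.
Unset Printing Implicit Defensive.

Section Cox.
Variable C : coxeter_system.
Local Notation W := (cW C).
Local Notation S := (cS C).
Local Notation "x * y" := (@cmul C x y).
Local Notation one := (cone C).
Local Notation inv := (@cinv C).
Local Notation g := (@cgen C).

Lemma mulA x y z : x * (y * z) = x * y * z.
Proof. by case: (cW_group C). Qed.
Lemma mul1w x : one * x = x.
Proof. by case: (cW_group C). Qed.
Lemma mulw1 x : x * one = x.
Proof. by case: (cW_group C). Qed.
Lemma mulVw x : inv x * x = one.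
Proof. by case: (cW_group C). Qed.
Lemma mulwV x : x * inv x = one.
Proof. by case: (cW_group C). Qed.
Lemma mulKw x y : inv x * (x * y) = y.
Proof. by rewrite mulA mulVw mul1w. Qed.
Lemma mulVKw x y : x * (inv x * y) = y.
Proof. by rewrite mulA mulwV mul1w. Qed.
Lemma mulwK x y : x * y * inv y = x.
Proof. by rewrite -mulA mulwV mulw1. Qed.
Lemma mulwVK x y : x * inv y * y = x.
Proof. by rewrite -mulA mulVw mulw1. Qed.
Lemma mulIw x y z : x * y = x * z -> y = z.
Proof. by move=> h; rewrite -(mulKw x y) h mulKw. Qed.
Lemma mulwI x y z : y * x = z * x -> y = z.
Proof. by move=> h; rewrite -(mulwK y x) h mulwK. Qed.
Lemma inv_uniq x y : x * y = one -> inv x = y.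
Proof. by move=> h; apply: (@mulIw x); rewrite mulwV h. Qed.
Lemma invM x y : inv (x * y) = inv y * inv x.
Proof. by apply: inv_uniq; rewrite mulA mulwK mulwV. Qed.
Lemma invK x : inv (inv x) = x.
Proof. by apply: inv_uniq; rewrite mulVw. Qed.
Lemma inv1 : inv one = one.
Proof. by apply: inv_uniq; rewrite mulw1. Qed.

Lemma gg s : g s * g s = one.
Proof.
have h : 0 < cm s s by rewrite cm_diag.
by have := crel h; rewrite cm_diag /= mulw1.
Qed.

Lemma ginv s : inv (g s) = g s.
Proof. by apply: inv_uniq; rewrite gg. Qed.

Lemma wprod_nil : wprod (C:=C) [::] = one. Proof. by []. Qed.
Lemma wprod_cons s (l : seq S) : wprod (s :: l) = g s * wprod l. Proof. by []. Qed.
Lemma wprod_cat (l1 l2 : seq S) : wprod (l1 ++ l2) = wprod l1 * wprod l2.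
Proof. elim: l1 => [|s l IH] /=; first by rewrite mul1w. by rewrite IH mulA. Qed.
Lemma wprod1 s : wprod [:: s] = g s. Proof. by rewrite /= mulw1. Qed.
Lemma wprod_rcons (l : seq S) s : wprod (rcons l s) = wprod l * g s.
Proof. by rewrite -cats1 wprod_cat wprod1. Qed.
Lemma wprod_rev (l : seq S) : wprod (rev l) = inv (wprod l).
Proof.
elim: l => [|s l IH]; first by rewrite /= inv1.
by rewrite rev_cons wprod_rcons IH wprod_cons invM ginv.
Qed.

Lemma length_exists (w : W) : exists n, is_length w n.
Proof.
have [l0 hl0] := cgenerated w.
suff H : forall k, (exists l, size l <= k /\ wprod l = w) -> exists n, is_length w n.
  by apply: (H (size l0)); exists l0; split; rewrite // /wprod -hl0.
elim=> [|k IH] [l [hs hw]].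
  exists 0; split; first by exists l; split => //; apply/eqP; rewrite -leqn0.
  by [].
case: (classic (exists l', size l' <= k /\ wprod l' = w)) => [h|h]; first exact: IH.
exists (size l); split; first by exists l.
move=> l' hl'; rewrite leqNgt; apply/negP => hlt; apply: h; exists l'; split => //.
by rewrite -ltnS (leq_trans hlt hs).
Qed.

Lemma ell_spec (w : W) : is_length w (ell w).
Proof. rewrite /ell; apply: epsilon_spec; exact: length_exists. Qed.

Lemma ell_word (w : W) : exists l, size l = ell w /\ wprod l = w.
Proof. by case: (ell_spec w). Qed.

Lemma ell_min (l : seq S) : ell (wprod l) <= size l.
Proof. by case: (ell_spec (wprod l)) => _ h; apply: h. Qed.

Lemma ell_min' (w : W) (l : seq S) : wprod l = w -> ell w <= size l.
Proof. by move=> <-; apply: ell_min. Qed.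

Lemma ell1 : ell one = 0.
Proof. by apply/eqP; rewrite -leqn0; apply: (@ell_min' _ [::]). Qed.

Lemma ell0 (w : W) : ell w = 0 -> w = one.
Proof. move=> H; case: (ell_word w) => l [h <-]; move: h; rewrite H; by case: l. Qed.

Lemma ell_mul a b : ell (a * b) <= ell a + ell b.
Proof.
case: (ell_word a) => la [ha ea]; case: (ell_word b) => lb [hb eb].
by rewrite -ha -hb -ea -eb -wprod_cat -size_cat ell_min.
Qed.

Lemma ell_inv (w : W) : ell (inv w) = ell w.
Proof.
suff H : forall w, ell (inv w) <= ell w.
  by apply/eqP; rewrite eqn_leq H /= -{1}(invK w) H.
move=> x; case: (ell_word x) => l [hl el].
by rewrite -hl -el -wprod_rev -size_rev ell_min.
Qed.

Lemma ell_g s : ell (g s) <= 1.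
Proof. by rewrite -wprod1 ell_min. Qed.

Lemma parity_hom : exists h : W -> bool,
  (forall x y, h (x * y) = h x (+) h y) /\ (forall s, h (g s) = true).
Proof.
have G : is_group addb false id.
  split=> [x y z|x|x|x|x]; by case: x; rewrite ?addbA //; case: y.
have := @cuniversal C bool addb false id G (fun _ => true).
apply=> s t _; by elim: (cm s t) => //= n ->.
Qed.

Lemma ell_parity_step (w : W) s : ell (w * g s) = (ell w).+1 \/ ell w = (ell (w * g s)).+1.
Proof.
have [h [hM hg]] := parity_hom.
have hw : forall l, h (wprod l) = odd (size l).
  elim=> [|t l IH] /=.
    have := hM one one; rewrite mulw1; by case: (h one).
  by rewrite hM IH hg.
have par : forall x, h x = odd (ell x).
  by move=> x; case: (ell_word x) => l [<- <-]; rewrite hw.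
have hp : odd (ell (w * g s)) = ~~ odd (ell w).
  by rewrite -!par hM hg addbT.
have h1 : ell (w * g s) <= (ell w).+1 by rewrite -addn1; apply: leq_trans (ell_mul _ _) _; rewrite leq_add2l ell_g.
have h2 : ell w <= (ell (w * g s)).+1.
  rewrite -addn1; apply: leq_trans (_ : ell (w * g s * g s) <= _).
    by rewrite -mulA gg mulw1.
  by apply: leq_trans (ell_mul _ _) _; rewrite leq_add2l ell_g.
case: (ltngtP (ell (w * g s)) (ell w)) => hc.
- by right; apply/eqP; rewrite eqn_leq h2 hc.
- by left; apply/eqP; rewrite eqn_leq h1 hc.
- by move: hp; rewrite hc; case: (odd _).
Qed.

Definition weq (x y : W) : bool :=
  if excluded_middle_informative (x = y) then true else false.
Lemma weqP (x y : W) : reflect (x = y) (weq x y).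
Proof. rewrite /weq; case: excluded_middle_informative => h; by constructor. Qed.
Lemma weq_iff (x y x' y' : W) : (x = y <-> x' = y') -> weq x y = weq x' y'.
Proof. by move=> h; apply/weqP/weqP; apply h. Qed.
Lemma weq_refl (x : W) : weq x x.
Proof. exact/weqP. Qed.

Lemma conjK s (x : W) : g s * (g s * x * g s) * g s = x.
Proof. by rewrite !mulA gg mul1w -mulA gg mulw1. Qed.
Lemma conj_inj s (x y : W) : g s * x * g s = g s * y * g s -> x = y.
Proof. by move=> h; rewrite -(conjK s x) h conjK. Qed.
Lemma conj_g s : g s * g s * g s = g s.
Proof. by rewrite gg mul1w. Qed.

Definition X := (W * bool)%type.
Definition pi s (p : X) : X := (g s * p.1 * g s, p.2 (+) weq p.1 (g s)).

Lemma pi_invol s : cancel (pi s) (pi s).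
Proof.
case=> r e; rewrite /pi /=; congr pair; first by rewrite conjK.
have -> : weq (g s * r * g s) (g s) = weq r (g s).
  by apply: weq_iff; split => [h|->]; [apply: (@conj_inj s); rewrite h conj_g|rewrite conj_g].
by rewrite -addbA addbb addbF.
Qed.

Definition Gt := {f : (X -> X) * (X -> X) | cancel f.1 f.2 /\ cancel f.2 f.1}.
Definition Gf (a : Gt) := (proj1_sig a).1.
Lemma Gext (a b : Gt) : (forall p, Gf a p = Gf b p) -> a = b.
Proof.
case: a => [[fa ga] [/= ha1 ha2]]; case: b => [[fb gb] [/= hb1 hb2]]; rewrite /Gf /= => h.
have efg : fa = fb by apply: functional_extensionality.
subst fb.
have egg : ga = gb.
  by apply: functional_extensionality => p; rewrite -{1}(hb2 p) ha1.
subst gb; f_equal; apply: proof_irrelevance.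
Qed.

Definition Gm (a b : Gt) : Gt.
refine (exist _ ((proj1_sig a).1 \o (proj1_sig b).1, (proj1_sig b).2 \o (proj1_sig a).2) _).
case: a => [[fa ga] [/= ha1 ha2]]; case: b => [[fb gb] [/= hb1 hb2]] /=.
by split => p /=; rewrite ?ha1 ?hb1 ?hb2 ?ha2.
Defined.
Definition G1 : Gt := exist _ (id, id) (conj (fun _ => erefl) (fun _ => erefl)).
Definition Gi (a : Gt) : Gt :=
  exist _ ((proj1_sig a).2, (proj1_sig a).1) (conj (proj2 (proj2_sig a)) (proj1 (proj2_sig a))).

Lemma G_group : is_group Gm G1 Gi.
Proof.
split=> [a b c|a|a|a|a]; apply: Gext => p //.
- by case: a => [[fa ga] [/= ha1 ha2]]; rewrite /Gf /=.
- by case: a => [[fa ga] [/= ha1 ha2]]; rewrite /Gf /=.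
Qed.

Definition piG s : Gt := exist _ (pi s, pi s) (conj (pi_invol s) (pi_invol s)).

Lemma Gf_pow (a : Gt) k p : Gf (gpow Gm G1 a k) p = iter k (Gf a) p.
Proof. by elim: k => //= k <-. Qed.

Lemma gpowS' (x : W) k : gpow (@cmul C) one x k.+1 = gpow (@cmul C) one x k * x.
Proof.
elim: k => [|k IH] /=; first by rewrite mulw1 mul1w.
by move: IH => /= IH; rewrite {1}IH mulA.
Qed.
Lemma gpow_comm (x : W) k : x * gpow (@cmul C) one x k = gpow (@cmul C) one x k * x.
Proof. exact: gpowS'. Qed.
Lemma gpowD (x : W) a b : gpow (@cmul C) one x (a + b) = gpow (@cmul C) one x a * gpow (@cmul C) one x b.
Proof. elim: a => [|a IH] /=; first by rewrite mul1w. by rewrite IH mulA. Qed.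

Section Braid.
Variables s t : S.
Hypothesis hm : 0 < cm s t.
Local Notation A k := (gpow (@cmul C) one (g s * g t) k).
Local Notation B k := (gpow (@cmul C) one (g t * g s) k).
Definition zz i := B i * g t.

Lemma AB k : A k * B k = one.
Proof.
elim: k => [|k IH]; first by rewrite /= mulw1.
rewrite gpowS' [B k.+1]/= -!mulA (mulA (g t) (g t)) gg mul1w (mulA (g s) (g s)) gg mul1w IH //.
Qed.
Lemma BA k : B k * A k = one.
Proof.
elim: k => [|k IH]; first by rewrite /= mulw1.
rewrite gpowS' [A k.+1]/= -!mulA (mulA (g s) (g s)) gg mul1w (mulA (g t) (g t)) gg mul1w IH //.
Qed.
Lemma tA k : g t * A k = B k * g t.
Proof.
elim: k => [|k IH] /=; first by rewrite mulw1 mul1w.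
by rewrite -!mulA IH !mulA.
Qed.

Fixpoint c2 (r : W) n := if n is n'.+1 then c2 r n' (+) weq r (zz n') else false.
Fixpoint cnt (r : W) k := if k is k'.+1 then cnt r k' (+) weq r (zz (k' + k')) (+) weq r (zz (k' + k').+1) else false.

Lemma cnt_c2 r k : cnt r k = c2 r (k + k).
Proof. elim: k => [|k IH] //; by rewrite addSn addnS /= IH. Qed.

Lemma braid_iter k r e :
  iter k (pi s \o pi t) (r, e) = (A k * r * B k, e (+) cnt r k).
Proof.
elim: k => [|k IH]; first by rewrite /= mul1w mulw1 addbF.
rewrite iterS IH /= /pi /=.
congr pair.
  by rewrite (gpow_comm (g t * g s)) !mulA.
rewrite -!addbA; congr addb; congr addb.
have hr : forall y, (A k * r * B k = y <-> r = B k * y * A k).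
  move=> y; split => [<-|->]; first by rewrite !mulA BA mul1w -mulA BA mulw1.
  by rewrite !mulA AB mul1w -mulA AB mulw1.
congr addb.
  apply: weq_iff; rewrite hr; split=> ->; rewrite /zz -mulA tA mulA -gpowD //.
have e1 : B k * g t * g s * B k * g t = zz (k+k).+1.
  by rewrite /zz -(mulA (B k)) -gpowS' -gpowD addSn.
have e2 : zz (k+k).+1 = B k * (g t * g s * g t) * A k.
  by rewrite -e1 !mulA -(mulA _ (g t) (A k)) tA !mulA.
rewrite e2; apply: weq_iff; rewrite -hr; split => [h|->]; last by rewrite conjK.
by rewrite -(conjK t (A k * r * B k)) h.
Qed.

Lemma c2_shift r m : (forall i, zz (m + i) = zz i) ->
  forall n, c2 r (m + n) = c2 r m (+) c2 r n.
Proof.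
move=> hz; elim=> [|n IH]; first by rewrite addn0 addbF.
by rewrite addnS /= IH hz addbA.
Qed.

Lemma braid_rel : gpow Gm G1 (Gm (piG s) (piG t)) (cm s t) = G1.
Proof.
apply: Gext => [[r e]]; rewrite Gf_pow.
have -> : Gf (Gm (piG s) (piG t)) = pi s \o pi t by [].
rewrite braid_iter.
have hA : A (cm s t) = one by apply: crel.
have hB : B (cm s t) = one by rewrite cm_sym; apply: crel; rewrite cm_sym.
rewrite hA hB mul1w mulw1 /Gf /= cnt_c2.
rewrite (@c2_shift r (cm s t)) ?addbb ?addbF //.
by move=> i; rewrite /zz gpowD hB mul1w.
Qed.
End Braid.

Definition hom_prop (h : W -> Gt) :=
  (forall x y, h (x * y) = Gm (h x) (h y)) /\ (forall s, h (g s) = piG s).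

Lemma hom_ex : exists h, hom_prop h.
Proof.
have := @cuniversal C Gt Gm G1 Gi G_group piG.
by apply=> s t hm; apply: braid_rel.
Qed.

Definition hrep : W -> Gt := epsilon (inhabits (fun _ => G1)) hom_prop.
Lemma hrep_spec : hom_prop hrep.
Proof. exact: (epsilon_spec _ _ hom_ex). Qed.

Definition act (w : W) (p : X) : X := Gf (hrep w) p.
Lemma act_mul x y p : act (x * y) p = act x (act y p).
Proof. by rewrite /act (proj1 hrep_spec). Qed.
Lemma act_g s p : act (g s) p = pi s p.
Proof. by rewrite /act (proj2 hrep_spec). Qed.
Lemma act_one p : act one p = p.
Proof.
pose q := (proj1_sig (hrep one)).2 p.
have hq : act one q = p by rewrite /act /Gf /q; case: (hrep one) => [[f f'] [/= h1 h2]] /=; rewrite h2.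
by rewrite -{1}hq -act_mul mulw1.
Qed.

Fixpoint nw (l : seq S) (r : W) : bool :=
  if l is s :: l' then nw l' r (+) weq (wprod l' * r * inv (wprod l')) (g s) else false.

Lemma act_word (l : seq S) r e :
  act (wprod l) (r, e) = (wprod l * r * inv (wprod l), e (+) nw l r).
Proof.
elim: l r e => [|s l IH] r e /=.
  by rewrite act_one mul1w inv1 mulw1 addbF.
rewrite act_mul IH act_g /pi /=; congr pair.
  by rewrite invM ginv !mulA.
by rewrite addbA.
Qed.

Definition nn (w : W) (r : W) : bool := (act w (r, false)).2.

Lemma nn_word (l : seq S) r : nn (wprod l) r = nw l r.
Proof. by rewrite /nn act_word. Qed.

Lemma act_snd (w : W) r e : (act w (r, e)).2 = e (+) nn w r.
Proof.
have [l hl] := cgenerated w.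
have -> : w = wprod l by [].
by rewrite /nn !act_word.
Qed.

Lemma nn_mulg (w : W) s r : nn (w * g s) r = weq r (g s) (+) nn w (g s * r * g s).
Proof. by rewrite /nn act_mul act_g /pi /= act_snd. Qed.

Fixpoint rhos (l : seq S) : list W :=
  if l is s :: l' then (inv (wprod l') * g s * wprod l') :: rhos l' else nil.

Fixpoint par (r : W) (xs : list W) : bool :=
  if xs is x :: xs' then weq r x (+) par r xs' else false.

Lemma nw_par (l : seq S) r : nw l r = par r (rhos l).
Proof.
elim: l => [|s l IH] //=; rewrite IH addbC; congr addb.
apply: weq_iff; split => [<-|->]; first by rewrite !mulA mulVw mul1w mulwVK.
by rewrite !mulA mulwK mulwV mul1w.
Qed.

Lemma nn_par l r : nn (wprod l) r = par r (rhos l).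
Proof. by rewrite nn_word nw_par. Qed.

Lemma par_notin (r : W) xs : ~ List.In r xs -> par r xs = false.
Proof.
elim: xs => [|x xs IH] //= h.
rewrite IH; last by move=> h'; apply: h; right.
by case: weqP => // e; case: h; left.
Qed.

Lemma par_in (r : W) xs : List.NoDup xs -> List.In r xs -> par r xs = true.
Proof.
elim: xs => [|x xs IH] //= hnd hin.
move: hnd => /List.NoDup_cons_iff [hx hnd].
case: hin => [e|hin].
  subst x; by rewrite weq_refl par_notin.
rewrite IH //; case: weqP => // e; subst x; by case: hx.
Qed.

Lemma length_rhos (l : seq S) : List.length (rhos l) = size l.
Proof. by elim: l => //= s l ->. Qed.

Lemma In_rhos (x : W) (l : seq S) : List.In x (rhos l) ->
  exists b s c, l = b ++ s :: c /\ x = inv (wprod c) * g s * wprod c.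
Proof.
elim: l => [|s l IH] //= [e|h].
  by exists [::], s, l.
have [b [s' [c [hl hx]]]] := IH h.
by exists (s :: b), s', c; rewrite hl.
Qed.

Lemma reduced_cons (s : S) (l : seq S) : size (s :: l) = ell (wprod (s :: l)) -> size l = ell (wprod l).
Proof.
move=> h; apply/eqP; rewrite eqn_leq ell_min andbT.
have := ell_mul (g s) (wprod l); rewrite -wprod_cons -h /=.
move=> h2; have := leq_trans h2 (leq_add (ell_g s) (leqnn _)).
by rewrite add1n ltnS.
Qed.

Lemma rhos_nodup (l : seq S) : size l = ell (wprod l) -> List.NoDup (rhos l).
Proof.
elim: l => [|s l IH] h /=; first by constructor.
have hl := reduced_cons h.
constructor; last exact: IH.
move=> /In_rhos [b [s' [c [hlc hx]]]].
have e : g s * wprod l = wprod (b ++ c).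
  have hD : wprod l = wprod b * g s' * wprod c by rewrite hlc wprod_cat /= mulA.
  rewrite wprod_cat; move: hx; rewrite hD => hx.
  have : wprod b * g s' * wprod c * (inv (wprod b * g s' * wprod c) * g s * (wprod b * g s' * wprod c))
     = wprod b * g s' * wprod c * (inv (wprod c) * g s' * wprod c) by rewrite hx.
  rewrite !mulA mulwV mul1w => ->.
  by rewrite mulwK -(mulA (wprod b)) gg mulw1.
have := ell_min (b ++ c); rewrite -e -wprod_cons -h hlc /= => H.
by have := leq_trans (leqnSn _) H; rewrite !size_cat /= addnS ltnn.
Qed.

Lemma NoDup_map_inj (A B : Type) (f : A -> B) xs :
  (forall x y, f x = f y -> x = y) -> List.NoDup xs -> List.NoDup (List.map f xs).
Proof.
move=> hf; elim: xs => [|x xs IH] /= hnd; first constructor.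
move: hnd => /List.NoDup_cons_iff [hx hnd].
constructor; last exact: IH.
move=> /List.in_map_iff [y [hy hin]].
by apply: hx; rewrite -(hf _ _ hy).
Qed.

Lemma nn_true_of_desc (w : W) s : ell (w * g s) < ell w -> nn w (g s) = true.
Proof.
move=> hlt; apply/negPn/negP => /negbTE hn.
have [l1 [h1 e1]] := ell_word w.
have [l2 [h2 e2]] := ell_word (w * g s).
have hnd1 : List.NoDup (rhos l1) by apply: rhos_nodup; rewrite e1 h1.
have hin1 : forall x, List.In x (rhos l1) -> nn w x = true.
  by move=> x hx; rewrite -e1 nn_par par_in.
have hs1 : ~ List.In (g s) (rhos l1) by move=> /hin1; rewrite hn.
pose L := g s :: List.map (fun x => g s * x * g s) (rhos l1).
have hndL : List.NoDup L.
  constructor.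
    move=> /List.in_map_iff [x [hx hin]]; apply: hs1.
    have e : x = g s by apply: (@conj_inj s); rewrite hx conj_g.
    by rewrite -e.
  by apply: NoDup_map_inj => //; apply: conj_inj.
have hincl : List.incl L (rhos l2).
  move=> y hy.
  suff hy2 : nn (w * g s) y = true.
    apply: NNPP => hn'; move: hy2; by rewrite -e2 nn_par par_notin.
  case: hy => [<-|/List.in_map_iff [x [<- hx]]].
    by rewrite nn_mulg weq_refl conj_g hn.
  rewrite nn_mulg conjK (hin1 _ hx).
  have -> : weq (g s * x * g s) (g s) = false.
    apply/weqP => e; apply: hs1.
    have e' : x = g s by apply: (@conj_inj s); rewrite e conj_g.
    by rewrite -e'.
  by [].
have := List.NoDup_incl_length hndL hincl.
rewrite /= List.length_map !length_rhos h1 h2 => /leP H.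
by have := leq_trans H (ltnW hlt); rewrite ltnn.
Qed.

Lemma exchange (w : W) s (l : seq S) : ell (w * g s) < ell w -> wprod l = w ->
  exists b t c, l = b ++ t :: c /\ w * g s = wprod (b ++ c).
Proof.
move=> hlt hl; have hn := nn_true_of_desc hlt.
have hin : List.In (g s) (rhos l).
  apply: NNPP => hni; by move: hn; rewrite -hl nn_par par_notin.
have [b [t [c [hlc hx]]]] := In_rhos hin.
exists b, t, c; split => //.
rewrite -hl hlc hx !wprod_cat /= !mulA mulwK -(mulA (wprod b)) gg mulw1 //.
Qed.

Lemma deletion (l : seq S) : exists l', {subset l' <= l} /\ wprod l' = wprod l /\ size l' = ell (wprod l).
Proof.
suff H : forall n (l : seq S), size l <= n ->
  exists l', {subset l' <= l} /\ wprod l' = wprod l /\ size l' = ell (wprod l).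
  exact: (H (size l)).
elim=> [|n IH] {}l hs.
  have -> : l = [::] by case: l hs.
  by exists [::]; rewrite /= ell1.
move: hs; case/lastP: l => [|l0 s] hs.
  by exists [::]; rewrite /= ell1.
have hs0 : size l0 <= n by move: hs; rewrite size_rcons ltnS.
have [l0' [sub0 [e0 sz0]]] := IH l0 hs0.
case: (ell_parity_step (wprod l0) s) => hc.
  exists (rcons l0' s); split.
    move=> x; rewrite !mem_rcons !inE => /orP [->//|hx].
    by rewrite sub0 ?orbT.
  by rewrite !wprod_rcons e0 size_rcons sz0 hc.
have hlt : ell (wprod l0 * g s) < ell (wprod l0) by rewrite hc.
have [b [t [c [hlc hbc]]]] := exchange hlt e0.
have hbcs : size (b ++ c) <= n.
  have : size l0' <= size l0 by rewrite sz0 ell_min.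
  rewrite hlc !size_cat /= addnS => h.
  exact: leq_trans (ltnW h) hs0.
have [l'' [sub'' [e'' sz'']]] := IH (b ++ c) hbcs.
exists l''; split.
  move=> x /sub''; rewrite mem_cat => hx.
  rewrite mem_rcons inE sub0 ?orbT // hlc mem_cat inE.
  by case/orP: hx => ->; rewrite ?orbT.
by rewrite e'' sz'' wprod_rcons hbc.
Qed.

Lemma ell_gs s : ell (g s) = 1.
Proof. by case: (ell_parity_step one s); rewrite mul1w ell1. Qed.

Lemma desc_or (w : W) s : ell (w * g s) < ell w \/ ell w < ell (w * g s).
Proof. by case: (ell_parity_step w s) => ->; [right|left]. Qed.

Lemma reduced_cat (a b : seq S) : size (a ++ b) = ell (wprod (a ++ b)) ->
  size a = ell (wprod a) /\ size b = ell (wprod b).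
Proof.
move=> h.
have h1 := ell_min a; have h2 := ell_min b.
have h3 := ell_mul (wprod a) (wprod b); rewrite -wprod_cat -h size_cat in h3.
have h4 : ell (wprod a) + ell (wprod b) <= size a + size b by rewrite leq_add.
split; apply/eqP; rewrite eqn_leq ?h1 ?h2 /= ?andbT.
  by rewrite -(leq_add2r (size b)); apply: leq_trans h3 _; rewrite leq_add2l.
by rewrite -(leq_add2l (size a)); apply: leq_trans h3 _; rewrite leq_add2r.
Qed.

Lemma red_last (w : W) : w <> one -> exists l s, wprod (rcons l s) = w /\ size (rcons l s) = ell w.
Proof.
move=> hw; have [l [hs hl]] := ell_word w.
move: hs hl; case/lastP: l => [|l s] hs hl.
  by case: hw; rewrite -hl.
by exists l, s.
Qed.

Lemma desc_last (l : seq S) s : size (rcons l s) = ell (wprod (rcons l s)) ->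
  ell (wprod (rcons l s) * g s) < ell (wprod (rcons l s)).
Proof.
move=> h; rewrite wprod_rcons -mulA gg mulw1 -wprod_rcons -h size_rcons ltnS ell_min //.
Qed.

Lemma WI_one (I : S -> Prop) : in_WI I one.
Proof. by exists [::]. Qed.
Lemma WI_mul (I : S -> Prop) a b : in_WI I a -> in_WI I b -> in_WI I (a * b).
Proof.
move=> [la [ha <-]] [lb [hb <-]]; exists (la ++ lb); split; last exact: wprod_cat.
by move=> s; rewrite mem_cat => /orP [/ha|/hb].
Qed.
Lemma WI_inv (I : S -> Prop) a : in_WI I a -> in_WI I (inv a).
Proof.
move=> [la [ha <-]]; exists (rev la); split; last exact: wprod_rev.
by move=> s; rewrite mem_rev => /ha.
Qed.
Lemma WI_g (I : S -> Prop) s : I s -> in_WI I (g s).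
Proof. by move=> hs; exists [:: s]; split; [move=> t; rewrite inE => /eqP ->|rewrite wprod1]. Qed.
Lemma WI_mono (I J : S -> Prop) w : (forall s, I s -> J s) -> in_WI I w -> in_WI J w.
Proof. by move=> hIJ [l [hl <-]]; exists l; split => // s /hl /hIJ. Qed.
Lemma WI_red (I : S -> Prop) w : in_WI I w ->
  exists l, (forall s, s \in l -> I s) /\ wprod l = w /\ size l = ell w.
Proof.
move=> [l [hl <-]]; have [l' [hsub [he hs]]] := deletion l.
by exists l'; split => // s /hsub /hl.
Qed.

Lemma cat_split (T : Type) (lx l0 b c : seq T) t : b ++ t :: c = lx ++ l0 ->
  (exists b', lx = b ++ t :: b' /\ c = b' ++ l0) \/ (exists c', l0 = c' ++ t :: c /\ b = lx ++ c').
Proof.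
elim: lx b => [|y lx IH] b /= h.
  by right; exists b.
case: b h => [|z b] /= [e1 e2].
  by left; exists lx; rewrite e1 e2.
case: (IH b e2) => [[b' [h1 h2]]|[c' [h1 h2]]].
  by left; exists b'; rewrite e1 h1 h2.
by right; exists c'; rewrite e1 h1 h2.
Qed.

Lemma nat_min (P : nat -> Prop) n : P n -> exists m, P m /\ forall k, P k -> m <= k.
Proof.
move: n; suff H : forall N n, n <= N -> P n -> exists m, P m /\ forall k, P k -> m <= k.
  by move=> n; apply: (H n).
elim=> [|N IH] n hn hp.
  exists n; split => // k _; by move: hn; rewrite leqn0 => /eqP ->.
case: (classic (exists k, P k /\ k < n)) => [[k [hk hkn]]|hno].
  by apply: (IH k) => //; rewrite -ltnS (leq_trans hkn hn).
exists n; split => // k hk; rewrite leqNgt; apply/negP => hkn; apply: hno; by exists k.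
Qed.

Lemma coset_min (I : S -> Prop) x : exists y0, in_WI I y0 /\ forall y, in_WI I y -> ell (x * y0) <= ell (x * y).
Proof.
have [m [[y0 [hy0 hm]] hmin]] := @nat_min (fun n => exists y, in_WI I y /\ ell (x * y) = n) (ell (x * one))
  (ex_intro _ one (conj (WI_one I) erefl)).
exists y0; split => // y hy; rewrite hm; apply: hmin; by exists y.
Qed.

Definition minc (I : S -> Prop) x := forall y, in_WI I y -> ell x <= ell (x * y).

Lemma minc_add (I : S -> Prop) x y : minc I x -> in_WI I y -> ell (x * y) = ell x + ell y.
Proof.
move=> hx hy; have [l [hlI [hl hsz]]] := WI_red hy; subst y; clear hy.
rewrite -hsz; move: hlI hsz; elim/last_ind: l => [|l0 s IH] hI hr.
  by rewrite /= mulw1 addn0.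
have hr' := hr; rewrite -cats1 in hr'; have [hr0 _] := reduced_cat hr'.
have hI0 : forall t, t \in l0 -> I t by move=> t ht; apply: hI; rewrite mem_rcons inE ht orbT.
have hIs : I s by apply: hI; rewrite mem_rcons inE eqxx.
have IH' := IH hI0 hr0.
rewrite wprod_rcons mulA size_rcons.
case: (desc_or (x * wprod l0) s) => hc; last first.
  by case: (ell_parity_step (x * wprod l0) s) => h; [rewrite h IH' addnS|move: hc; rewrite h ltnNge leqnSn].
exfalso.
have [lx [hlx elx]] := ell_word x.
have ex : wprod (lx ++ l0) = x * wprod l0 by rewrite wprod_cat elx.
have [b [t [c [hbc e]]]] := exchange hc ex.
case: (cat_split (esym hbc)) => [[b' [h1 h2]]|[c' [h1 h2]]].
- have e2 : wprod (b ++ b') = x * (wprod l0 * g s * inv (wprod l0)).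
    move: e; rewrite h2 catA wprod_cat => e.
    by rewrite !mulA e mulwK.
  have hW : in_WI I (wprod l0 * g s * inv (wprod l0)).
    apply: WI_mul; first (apply: WI_mul; [by exists l0|exact: WI_g]).
    by apply: WI_inv; exists l0.
  have H := hx _ hW; rewrite -e2 in H.
  by have := leq_trans H (ell_min _); rewrite -hlx h1 !size_cat /= addnS ltnn.
- have e2 : wprod l0 * g s = wprod (c' ++ c).
    apply: (@mulIw x); move: e; rewrite h2 -catA wprod_cat elx mulA => ->; by rewrite wprod_cat.
  have := ell_min (c' ++ c); rewrite -e2 -wprod_rcons -hr size_rcons h1 !size_cat /= addnS.
  by rewrite ltnNge leqW // leqnSn.
Qed.

Lemma XI_minc (I : S -> Prop) x : in_XI I x -> minc I x.
Proof.
move=> hX.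
have [y0 [hy0 hmin]] := coset_min I x.
have hm0 : minc I (x * y0).
  move=> y hy; rewrite -mulA; apply: hmin; exact: WI_mul.
have ex : x = x * y0 * inv y0 by rewrite mulwK.
have [l [hlI [hl hsz]]] := WI_red (WI_inv hy0).
move: hlI hl hsz; case/lastP: l => [|l1 s] hlI hl hsz.
  by rewrite ex -hl mulw1.
exfalso.
have hIs : I s by apply: hlI; rewrite mem_rcons inE eqxx.
have hr' := hsz; rewrite -hl -cats1 in hr'; have [hr1 _] := reduced_cat hr'.
have hW1 : in_WI I (wprod l1).
  by exists l1; split => // t ht; apply: hlI; rewrite mem_rcons inE ht orbT.
have e1 : x * g s = x * y0 * wprod l1.
  by rewrite {1}ex -hl wprod_rcons !mulA -(mulA _ (g s)) gg mulw1.
have hxl : ell x = ell (x * y0) + ell (inv y0) by rewrite {1}ex (minc_add hm0 (WI_inv hy0)).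
have := hX s hIs; rewrite e1 (minc_add hm0 hW1) hxl -hsz size_rcons hr1.
by rewrite ltn_add2l ltnNge leqnSn.
Qed.

Lemma XI_add (I : S -> Prop) x y : in_XI I x -> in_WI I y -> ell (x * y) = ell x + ell y.
Proof. by move=> hx; apply: minc_add; apply: XI_minc. Qed.

Lemma par_uniq (I : S -> Prop) x1 y1 x2 y2 : in_XI I x1 -> in_WI I y1 -> in_XI I x2 -> in_WI I y2 ->
  x1 * y1 = x2 * y2 -> x1 = x2 /\ y1 = y2.
Proof.
move=> hx1 hy1 hx2 hy2 e.
have e1 : x2 = x1 * (y1 * inv y2) by rewrite mulA e mulwK.
have e2 : x1 = x2 * (y2 * inv y1) by rewrite mulA -e mulwK.
have h1 := XI_add hx1 (WI_mul hy1 (WI_inv hy2)).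
have h2 := XI_add hx2 (WI_mul hy2 (WI_inv hy1)).
rewrite -e1 in h1; rewrite -e2 in h2.
have h0 : ell (y1 * inv y2) = 0.
  by move: h2; rewrite h1 -addnA -{1}(addn0 (ell x1)) => /eqP; rewrite eqn_add2l eq_sym addn_eq0 => /andP [/eqP].
have hy : y1 = y2 by rewrite -(mulwVK y1 y2) (ell0 h0) mul1w.
by split => //; rewrite e1 hy mulwV mulw1.
Qed.

Lemma par_exists (I : S -> Prop) w : exists p, par_decomp I w p.
Proof.
have [y0 [hy0 hmin]] := coset_min I w.
exists (w * y0, inv y0); split => /=; [|exact: WI_inv|by rewrite mulwK].
move=> s hs; case: (desc_or (w * y0) s) => // hc.
have := hmin (y0 * g s) (WI_mul hy0 (WI_g hs)); rewrite mulA leqNgt hc //.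
Qed.

Lemma par_spec (I : S -> Prop) w : in_XI I (wup I w) /\ in_WI I (wlo I w) /\ w = wup I w * wlo I w.
Proof.
rewrite /wup /wlo /par_comp.
by case: (epsilon_spec (inhabits (one, one)) (par_decomp I w) (par_exists I w)).
Qed.

Lemma par_char (I : S -> Prop) w x y : in_XI I x -> in_WI I y -> w = x * y ->
  wup I w = x /\ wlo I w = y.
Proof.
move=> hx hy e; have [h1 [h2 h3]] := par_spec I w.
by apply: (par_uniq h1 h2 hx hy); rewrite -h3 -e.
Qed.

Hypothesis gen_inj : forall s t, g s = g t -> s = t.

Lemma XI_one (K : S -> Prop) : in_XI K one.
Proof. by move=> s _; rewrite mul1w ell1 ell_gs. Qed.

Lemma wlo_WI (K : S -> Prop) w : in_WI K w -> wlo K w = w.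
Proof. by move=> h; case: (par_char (@XI_one K) h (esym (mul1w w))). Qed.

Lemma XI_mono (I J : S -> Prop) x : (forall s, I s -> J s) -> in_XI J x -> in_XI I x.
Proof. by move=> hIJ hx s /hIJ /hx. Qed.

Lemma g_XI (I : S -> Prop) s : ~ I s -> in_XI I (g s).
Proof.
move=> hs t ht; rewrite ell_gs.
case: (desc_or (g s) t); rewrite ell_gs // ltnS leqn0 => /eqP /ell0 e.
have e' : g s = g t by rewrite -(mulwK (g s) (g t)) e mul1w ginv.
by case: hs; rewrite (gen_inj e').
Qed.

Lemma red_in (I : S -> Prop) (l : seq S) : in_WI I (wprod l) -> size l = ell (wprod l) ->
  forall s, s \in l -> I s.
Proof.
elim/last_ind: l => [|l0 s IH] hW hr // t.
have hr' := hr; rewrite -cats1 in hr'; have [hr0 _] := reduced_cat hr'.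
have hIs : I s.
  apply: NNPP => hn.
  have h1 := XI_add (g_XI hn) (WI_inv hW).
  have e : g s * inv (wprod (rcons l0 s)) = inv (wprod l0).
    by rewrite wprod_rcons invM ginv mulA gg mul1w.
  rewrite e !ell_inv ell_gs -hr size_rcons in h1.
  by move: (ell_min l0); rewrite h1 add1n ltnNge leqW.
have hW0 : in_WI I (wprod l0).
  have -> : wprod l0 = wprod (rcons l0 s) * g s by rewrite wprod_rcons -mulA gg mulw1.
  exact: WI_mul hW (WI_g hIs).
rewrite mem_rcons inE => /orP [/eqP ->//|ht].
exact: IH.
Qed.

Lemma WI_supp (I : S -> Prop) (w : W) : in_WI I w -> forall s, supp w s -> I s.
Proof.
move=> hW s [l [[hl hs] hin]]; subst w.
by apply: (red_in hW).
Qed.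

Lemma supp_WI (w : W) : in_WI (supp w) w.
Proof.
have [l [hs hl]] := ell_word w.
by exists l; split => // s hin; exists l; split => //.
Qed.

Lemma supp_add a b : ell (a * b) = ell a + ell b ->
  (forall s, supp a s -> supp (a * b) s) /\ (forall s, supp b s -> supp (a * b) s).
Proof.
move=> h.
have [la [hsa hla]] := ell_word a; have [lb [hsb hlb]] := ell_word b.
split=> s [l [[hl hsl] hin]].
  exists (l ++ lb); split; last by rewrite mem_cat hin.
  by split; rewrite ?wprod_cat ?hl ?hlb // size_cat h hsl hsb.
exists (la ++ l); split; last by rewrite mem_cat hin orbT.
by split; rewrite ?wprod_cat ?hl ?hla // size_cat h hsl hsa.
Qed.

Lemma wlo_supp (K : S -> Prop) (w : W) s : supp (wlo K w) s -> supp w s.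
Proof.
have [h1 [h2 h3]] := par_spec K w.
have [_ H] := supp_add (XI_add h1 h2).
by move=> /H; rewrite -h3.
Qed.

Lemma cle_wlo (J : S -> Prop) (w : W) : cle (wlo J w) w.
Proof.
rewrite /cle; have [h1 [h2 h3]] := par_spec J w.
have hsub := WI_supp h2.
by case: (par_char (XI_mono hsub h1) (supp_WI (wlo J w)) h3).
Qed.

Lemma wlo_wlo (J K : S -> Prop) (w : W) : (forall s, J s -> K s) -> wlo J (wlo K w) = wlo J w.
Proof.
move=> hJK.
have [ha [hb e1]] := par_spec K w.
have [hc [hd e2]] := par_spec J (wlo K w).
set a := wup K w in ha e1 *; set b := wlo K w in hb e1 e2 hc hd *.
set c := wup J b in hc e2 *; set d := wlo J b in hd e2 *.
have hcK : in_WI K c.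
  have -> : c = b * inv d by rewrite {1}e2 mulwK.
  exact: WI_mul hb (WI_inv (WI_mono hJK hd)).
have hac : in_XI J (a * c).
  move=> s hs; have h1 := XI_add ha hcK.
  have h2 := XI_add ha (WI_mul hcK (WI_g (hJK _ hs))).
  by rewrite -mulA h2 h1 ltn_add2l; apply: hc.
have ew : w = (a * c) * d by rewrite -mulA -e2.
by case: (par_char hac hd ew).
Qed.

Lemma desc_suffix (a b : W) s : ell (a * b) = ell a + ell b -> ell (b * g s) < ell b ->
  ell (a * b * g s) < ell (a * b).
Proof.
move=> h hb; rewrite h -mulA; apply: leq_ltn_trans (ell_mul _ _) _.
by rewrite ltn_add2l.
Qed.

Lemma desc_suffix_conv (J : S -> Prop) a b s : in_XI J a -> in_WI J b -> J s ->
  ell (a * b * g s) < ell (a * b) -> ell (b * g s) < ell b.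
Proof.
move=> ha hb hs h; case: (desc_or b s) => // hc.
move: h; rewrite -mulA !(XI_add ha) //; last exact: WI_mul hb (WI_g hs).
by rewrite ltn_add2l ltnNge (ltnW hc).
Qed.

Section Main.
Variables u v : W.
Hypothesis huv : clt u v.

Definition xx := wup (supp u) v.
Definition Js (s : S) := fun r => supp u r \/ r = s.
Definition cc (s : S) := wlo (Js s) v.

Lemma hv : v = xx * u.
Proof. have [_ [_ h]] := par_spec (supp u) v; by rewrite {1}h (proj1 huv). Qed.
Lemma hxX : in_XI (supp u) xx.
Proof. by case: (par_spec (supp u) v). Qed.
Lemma huW : in_WI (supp u) u.
Proof. exact: supp_WI. Qed.

Lemma M1 (J : S -> Prop) : (forall r, supp u r -> J r) -> wlo J v = wlo J xx * u.
Proof.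
move=> hIJ; have [ha [hb e]] := par_spec J xx.
have ev : v = wup J xx * (wlo J xx * u) by rewrite mulA -e -hv.
have [_ ->] := par_char ha (WI_mul hb (WI_mono hIJ huW)) ev.
by [].
Qed.

Lemma M2 (J : S -> Prop) : in_XI (supp u) (wlo J xx).
Proof.
have [ha [hb e]] := par_spec J xx.
move=> s hs; case: (desc_or (wlo J xx) s) => // hc.
have := desc_suffix (XI_add ha hb) hc; rewrite -e => h.
by have := hxX hs; rewrite ltnNge (ltnW h).
Qed.

Lemma desc_supp (b : W) s : ell (b * g s) < ell b -> supp b s.
Proof.
move=> h; have [l [hl el]] := ell_word (b * g s).
exists (rcons l s); split; last by rewrite mem_rcons inE eqxx.
split; first by rewrite wprod_rcons el -mulA gg mulw1.
case: (ell_parity_step b s) => e; first by move: h; rewrite e ltnNge leqnSn.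
by rewrite size_rcons hl e.
Qed.

Section Desc.
Variable s : S.
Hypothesis hs : ell (xx * g s) < ell xx.

Lemma nIs : ~ supp u s.
Proof. by move=> h; have := hxX h; rewrite ltnNge (ltnW hs). Qed.

Lemma bdesc : ell (wlo (Js s) xx * g s) < ell (wlo (Js s) xx).
Proof.
have [ha [hb e]] := par_spec (Js s) xx.
apply: (desc_suffix_conv ha hb); first by right.
by rewrite -e.
Qed.

Lemma cc_eq : cc s = wlo (Js s) xx * u.
Proof. by apply: M1 => r hr; left. Qed.

Lemma cc_add : ell (cc s) = ell (wlo (Js s) xx) + ell u.
Proof. by rewrite cc_eq (XI_add (M2 _) huW). Qed.

Lemma supp_cc : supp (cc s) s.
Proof.
have hadd : ell (wlo (Js s) xx * u) = ell (wlo (Js s) xx) + ell u by rewrite -cc_eq cc_add.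
have [H _] := supp_add hadd; rewrite cc_eq.
by apply: H; apply: desc_supp; exact: bdesc.
Qed.

Lemma cc_WI : in_WI (Js s) (cc s).
Proof. by case: (par_spec (Js s) v) => _ []. Qed.

Lemma lt_u_cc : clt u (cc s).
Proof.
split.
  rewrite /cle cc_eq.
  by case: (par_char (M2 (Js s)) huW (erefl _)).
move=> e; have := supp_cc; rewrite -e => /(WI_supp huW) => h.
exact: nIs h.
Qed.

Lemma cover_cc : covers_in u v (cc s).
Proof.
split; first exact: lt_u_cc.
split; first exact: cle_wlo.
move=> [z [[hz1 hz2] [hz3 hz4]]].
set K := supp z.
have hzs : forall r, supp z r -> supp (cc s) r.
  by move=> r; rewrite -{1}hz3; apply: wlo_supp.
have hKJ : forall r, supp z r -> Js s r := fun r h => WI_supp cc_WI (hzs r h).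
have hIK : forall r, supp u r -> supp z r.
  by move=> r; rewrite -{1}hz1; apply: wlo_supp.
case: (classic (supp z s)) => hKs.
  apply: hz4; rewrite -hz3 wlo_WI //.
  apply: (WI_mono _ cc_WI) => r [/hIK //|->//].
apply: hz2; rewrite -hz1 wlo_WI //.
apply: (WI_mono _ (supp_WI z)) => r hr.
by case: (hKJ r hr) => // e; subst r.
Qed.

End Desc.

Lemma cover_char z : covers_in u v z -> exists s, ell (xx * g s) < ell xx /\ z = cc s.
Proof.
move=> [[hz1 hz2] [hz3 hz4]].
set K := supp z.
have hIK : forall r, supp u r -> K r.
  by move=> r; rewrite -{1}hz1; apply: wlo_supp.
have ez : z = wlo K xx * u by rewrite -(M1 hIK) hz3.
have hb1 : wlo K xx <> one by move=> e; apply: hz2; rewrite ez e mul1w.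
have [l [s [el sl]]] := red_last hb1.
have hbs : ell (wlo K xx * g s) < ell (wlo K xx) by rewrite -el desc_last // el.
have hKs : K s.
  apply: (WI_supp (proj1 (proj2 (par_spec K xx)))).
  exact: desc_supp hbs.
have [ha [hb e]] := par_spec K xx.
have hxs : ell (xx * g s) < ell xx.
  by rewrite e; apply: desc_suffix (XI_add ha hb) hbs.
exists s; split => //.
have hJK : forall r, Js s r -> K r by move=> r [/hIK //|->].
have ecs : cc s = wlo (Js s) z by rewrite /cc -hz3 wlo_wlo.
have hle : cle (cc s) z by rewrite ecs; apply: cle_wlo.
apply: NNPP => hne; apply: hz4; exists (cc s); split; first exact: lt_u_cc.
by split => // e'; apply: hne.
Qed.

Lemma cc_inj s s' : ell (xx * g s) < ell xx -> ell (xx * g s') < ell xx -> cc s = cc s' -> s = s'.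
Proof.
move=> hs hs' e.
have := supp_cc hs; rewrite e => /(WI_supp (cc_WI s')) [h|//].
by case: (nIs hs h).
Qed.

End Main.

Lemma In_mem (T : eqType) (x : T) (l : seq T) : List.In x l <-> x \in l.
Proof.
elim: l => [|y l IH] //=; rewrite inE; split.
  by case=> [->|/IH ->]; rewrite ?eqxx ?orbT.
by case/orP => [/eqP ->|/IH]; [left|right].
Qed.

Lemma uniq_NoDup (T : eqType) (l : seq T) : uniq l -> List.NoDup l.
Proof.
elim: l => [|y l IH] /=; first by constructor.
case/andP => hy hl; constructor; last exact: IH.
by move=> /In_mem; rewrite (negbTE hy).
Qed.

Lemma NoDup_map_inj_in (A B : Type) (f : A -> B) xs :
  (forall x y, List.In x xs -> List.In y xs -> f x = f y -> x = y) -> List.NoDup xs -> List.NoDup (List.map f xs).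
Proof.
elim: xs => [|x xs IH] /= hf hnd; first constructor.
move: hnd => /List.NoDup_cons_iff [hx hnd].
constructor; last by apply: IH => // a b ha hb; apply: hf; right.
move=> /List.in_map_iff [y [hy hin]].
by apply: hx; rewrite -(hf _ _ (or_intror hin) (or_introl erefl) hy).
Qed.

Lemma length_size (T : Type) (l : seq T) : List.length l = size l.
Proof. by elim: l => //= x l ->. Qed.

Lemma main_count (u v : W) : clt u v ->
  exists l : list W, List.NoDup l /\ (forall x, List.In x l <-> covers_in u v x) /\
    List.length l = #|Des (wup (supp u) v)|.
Proof.
move=> huv.
have hD : forall s, (s \in Des (wup (supp u) v)) = (ell (xx u v * g s) < ell (xx u v)).
  by move=> s; rewrite /Des inE.
exists (List.map (cc u v) (enum (Des (wup (supp u) v)))); split; [|split].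
- apply: NoDup_map_inj_in; last exact/uniq_NoDup/enum_uniq.
  move=> a b /In_mem ha /In_mem hb; rewrite !mem_enum !hD in ha hb.
  exact: cc_inj.
- move=> x; split.
    move=> /List.in_map_iff [s [<- /In_mem]]; rewrite mem_enum hD => hs.
    exact: cover_cc.
  move=> /(cover_char huv) [s [hs ->]].
  apply/List.in_map_iff; exists s; split => //.
  by apply/In_mem; rewrite mem_enum hD.
- by rewrite List.length_map length_size cardE.
Qed.

End Cox.

From HB Require Import structures.
From mathcomp Require Import all_boot all_algebra.
From mathcomp Require Import algC cyclotomic.
From mathcomp Require Import ring.
Import GRing.Theory Num.Theory.


Section PermG.
Variable T : Type.
Definition PG := {f : (T -> T) * (T -> T) | cancel f.1 f.2 /\ cancel f.2 f.1}.
Definition PGf (a : PG) := (proj1_sig a).1.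
Lemma PGext (a b : PG) : (forall p, PGf a p = PGf b p) -> a = b.
Proof.
case: a => [[fa ga] [/= ha1 ha2]]; case: b => [[fb gb] [/= hb1 hb2]]; rewrite /PGf /= => h.
have efg : fa = fb by apply: functional_extensionality.
subst fb.
have egg : ga = gb.
  by apply: functional_extensionality => p; rewrite -{1}(hb2 p) ha1.
subst gb; f_equal; apply: proof_irrelevance.
Qed.
Definition PGm (a b : PG) : PG.
refine (exist _ ((proj1_sig a).1 \o (proj1_sig b).1, (proj1_sig b).2 \o (proj1_sig a).2) _).
case: a => [[fa ga] [/= ha1 ha2]]; case: b => [[fb gb] [/= hb1 hb2]] /=.
by split => p /=; rewrite ?ha1 ?hb1 ?hb2 ?ha2.
Defined.
Definition PG1 : PG := exist _ (id, id) (conj (fun _ => erefl) (fun _ => erefl)).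
Definition PGi (a : PG) : PG :=
  exist _ ((proj1_sig a).2, (proj1_sig a).1) (conj (proj2 (proj2_sig a)) (proj1 (proj2_sig a))).
Lemma PG_group : is_group PGm PG1 PGi.
Proof.
split=> [a b c|a|a|a|a]; apply: PGext => p //.
- by case: a => [[fa ga] [/= ha1 ha2]]; rewrite /PGf /=.
- by case: a => [[fa ga] [/= ha1 ha2]]; rewrite /PGf /=.
Qed.
Lemma PGf_pow (a : PG) k p : PGf (gpow PGm PG1 a k) p = iter k (PGf a) p.
Proof. by elim: k => //= k <-. Qed.
Definition PGof (f : T -> T) (h : cancel f f) : PG := exist _ (f, f) (conj h h).
End PermG.

Section Sums.
Variable F : fieldType.
Local Open Scope ring_scope.
Fixpoint ssum (f : nat -> F) n := if n is n'.+1 then ssum f n' + f n' else 0.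

Lemma ssum_lin (f g : nat -> F) a b n :
  ssum (fun k => a * f k + b * g k) n = a * ssum f n + b * ssum g n.
Proof. elim: n => [|n IH] /=; first by ring. rewrite IH; ring. Qed.

Lemma ssum_ext (f g : nat -> F) n : (forall k, f k = g k) -> ssum f n = ssum g n.
Proof. by move=> h; elim: n => //= n ->; rewrite h. Qed.

Lemma ssum_scale (f : nat -> F) a n : ssum (fun k => a * f k) n = a * ssum f n.
Proof. elim: n => [|n IH] /=; first by ring. rewrite IH; ring. Qed.

Lemma geom (l : F) n : (l - 1) * ssum (fun k => l ^+ k) n = l ^+ n - 1.
Proof. elim: n => [|n IH] /=; first by rewrite expr0; ring. rewrite mulrDr IH exprS; ring. Qed.

Lemma geom0 (l : F) n : l ^+ n = 1 -> l != 1 -> ssum (fun k => l ^+ k) n = 0.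
Proof.
move=> h1 h2; have := geom l n; rewrite h1 subrr => /eqP; rewrite mulf_eq0 subr_eq0 (negbTE h2) /=.
by move/eqP.
Qed.

Lemma closed_form (l m0 : F) (y : nat -> F) : l * m0 = 1 -> l != m0 ->
  (forall k, y k.+2 = (l + m0) * y k.+1 - y k) ->
  forall k, y k = (y 1%N - m0 * y 0%N) / (l - m0) * l ^+ k + (l * y 0%N - y 1%N) / (l - m0) * m0 ^+ k.
Proof.
move=> hlm hne hrec.
have hD : l - m0 != 0 by rewrite subr_eq0.
set P := (y 1%N - m0 * y 0%N) / (l - m0); set Q := (l * y 0%N - y 1%N) / (l - m0).
suff H : forall k, y k = P * l ^+ k + Q * m0 ^+ k /\ y k.+1 = P * l ^+ k.+1 + Q * m0 ^+ k.+1.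
  by move=> k; case: (H k).
elim=> [|k [IH1 IH2]].
  rewrite !expr0 !expr1 /P /Q; split; field; exact: hD.
split => //; rewrite hrec IH1 IH2 !exprS.
have e1 : (l + m0) * (l * l ^+ k) - l ^+ k = l * (l * l ^+ k).
  rewrite mulrDl (mulrA m0 l) (mulrC m0 l) hlm mul1r; ring.
have e2 : (l + m0) * (m0 * m0 ^+ k) - m0 ^+ k = m0 * (m0 * m0 ^+ k).
  rewrite mulrDl (mulrA l m0) hlm mul1r; ring.
rewrite -e1 -e2; ring.
Qed.
End Sums.

Section Geo.
Variable C : coxeter_system.
Local Notation S := (cS C).
Local Open Scope ring_scope.

Definition lam (m : nat) : algC :=
  if m is m'.+1 then sval (C_prim_root_exists (ltn0Sn m')) else 1.
Lemma lam_prim m : (0 < m)%N -> m.-primitive_root (lam m).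
Proof. by case: m => // m _ /=; case: (C_prim_root_exists _). Qed.

Definition cc0 (m : nat) : algC := sqrtC (lam m + (lam m)^-1 + 2) / 2.
Definition bb (s t : S) : algC := if s == t then 1 else - cc0 (cm s t).
Definition V := S -> algC.
Definition ev (s : S) : V := fun r => if r == s then 1 else 0.
Definition beta (s : S) (v : V) : algC := \sum_(r : S) bb s r * v r.
Definition sig (s : S) (v : V) : V := fun r => v r + (- (2 * beta s v)) * ev s r.

Lemma bb_sym s t : bb s t = bb t s.
Proof. by rewrite /bb eq_sym cm_sym. Qed.
Lemma bb_diag s : bb s s = 1.
Proof. by rewrite /bb eqxx. Qed.

Lemma beta_add s (v : V) (a : algC) t :
  beta s (fun r => v r + a * ev t r) = beta s v + a * bb s t.
Proof.
rewrite /beta; under eq_bigr do rewrite mulrDr.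
rewrite big_split /=; congr (_ + _).
rewrite (bigD1 t) //= big1 => [|r hr]; first by rewrite /ev eqxx mulr1 addr0 mulrC.
by rewrite /ev (negbTE hr) mulr0 mulr0.
Qed.

Lemma beta_sig s' s (v : V) : beta s' (sig s v) = beta s' v - 2 * beta s v * bb s' s.
Proof. rewrite /sig beta_add; ring. Qed.

Lemma sig_invol s : cancel (sig s) (sig s).
Proof.
move=> v; apply: functional_extensionality => r.
rewrite {1}/sig beta_sig bb_diag /sig; ring.
Qed.

Definition sigG (s : S) : PG V := PGof (sig_invol s).

Lemma two_neq0 : (2 : algC) != 0.
Proof. by rewrite pnatr_eq0. Qed.

Lemma c_sq m : 4 * cc0 m ^+ 2 - 2 = lam m + (lam m)^-1.
Proof.
rewrite /cc0 expr_div_n sqrtCK.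
have h4 : (2 : algC) ^+ 2 = 4 by rewrite expr2 -natrM.
by rewrite h4; move: (lam m + (lam m)^-1) => y; field.
Qed.

Lemma sum_zero3 m (y : nat -> algC) : (2 < m)%N ->
  (forall k, y k.+2 = (4 * cc0 m ^+ 2 - 2) * y k.+1 - y k) -> ssum y m = 0.
Proof.
move=> hm hrec.
have hp : m.-primitive_root (lam m) by apply: lam_prim; apply: ltn_trans hm.
set l := lam m in hp hrec *.
have hl0 : l != 0 by rewrite (prim_root_eq0 hp) -lt0n (ltn_trans _ hm).
have hlm : l * l^-1 = 1 by rewrite mulfV.
have hl1 : l != 1.
  apply/eqP => e; have := prim_order_dvd hp 1; rewrite e expr1 eqxx => /dvdn_leq.
  by move=> /(_ isT); rewrite leqNgt (ltn_trans _ hm).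
have hne : l != l^-1.
  apply/eqP => e; have := prim_order_dvd hp 2; rewrite expr2 {2}e hlm eqxx => /dvdn_leq.
  by move=> /(_ isT); rewrite leqNgt hm.
have hlm1 : l ^+ m = 1 by apply: prim_expr_order.
have hmu1 : l^-1 ^+ m = 1 by rewrite exprVn hlm1 invr1.
have hmu : l^-1 != 1 by rewrite invr_eq1.
rewrite c_sq -/l in hrec.
have cf := closed_form hlm hne hrec.
rewrite (ssum_ext _ cf) ssum_lin (geom0 hlm1 hl1) (geom0 hmu1 hmu); ring.
Qed.

Lemma cc0_2 : cc0 2 = 0.
Proof.
have hp : 2.-primitive_root (lam 2) by apply: lam_prim.
set l := lam 2 in hp *.
have hl1 : l != 1.
  apply/eqP => e; have := prim_order_dvd hp 1; by rewrite e expr1 eqxx.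
have hl2 : l ^+ 2 = 1 by apply: prim_expr_order.
have hlm : l = -1.
  have : (l - 1) * (l + 1) = 0 by rewrite mulrDr mulr1 mulrBl -expr2 hl2 mul1r; ring.
  move/eqP; rewrite mulf_eq0 subr_eq0 (negbTE hl1) /= addr_eq0 => /eqP //.
rewrite /cc0 -/l hlm invrN1.
have -> : -1 + -1 + 2 = 0 :> algC by ring.
by rewrite sqrtC0 mul0r.
Qed.

Section Braid2.
Variables s t : S.
Hypothesis hst : s != t.
Hypothesis hm : (1 < cm s t)%N.
Local Notation c := (cc0 (cm s t)).
Lemma bst : bb s t = - c. Proof. by rewrite /bb (negbTE hst). Qed.
Lemma bts : bb t s = - c. Proof. by rewrite bb_sym bst. Qed.

Definition wv (v : V) : V := sig s (sig t v).

Lemma wv_expand v : wv v = fun r => v r + (-2 * (beta s v + 2 * c * beta t v)) * ev s r + (-2 * beta t v) * ev t r.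
Proof.
apply: functional_extensionality => r.
rewrite /wv {1}/sig beta_sig bst /sig; ring.
Qed.

Lemma beta_s_wv v : beta s (wv v) = - beta s v - 2 * c * beta t v.
Proof. rewrite /wv beta_sig !beta_sig !bb_diag ?bst ?bts; ring. Qed.
Lemma beta_t_wv v : beta t (wv v) = 2 * c * beta s v + (4 * c ^+ 2 - 1) * beta t v.
Proof. rewrite /wv beta_sig !beta_sig !bb_diag ?bst ?bts; ring. Qed.

Variable v : V.
Definition aa k := beta s (iter k wv v).
Definition bq k := beta t (iter k wv v).

Lemma iter_wv k : iter k wv v = fun r => v r + ssum (fun j => -2 * (aa j + 2 * c * bq j)) k * ev s r
   + ssum (fun j => -2 * bq j) k * ev t r.
Proof.
elim: k => [|k IH].
  by apply: functional_extensionality => r /=; ring.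
apply: functional_extensionality => r.
rewrite iterS wv_expand /=.
change (beta s (iter k wv v)) with (aa k); change (beta t (iter k wv v)) with (bq k).
rewrite IH /=; ring.
Qed.
Lemma aa_S k : aa k.+1 = - aa k - 2 * c * bq k.
Proof. by rewrite /aa /bq iterS beta_s_wv. Qed.
Lemma bq_S k : bq k.+1 = 2 * c * aa k + (4 * c ^+ 2 - 1) * bq k.
Proof. by rewrite /aa /bq iterS beta_t_wv. Qed.

Lemma aa_rec k : aa k.+2 = (4 * c ^+ 2 - 2) * aa k.+1 - aa k.
Proof.
have h0 : aa k.+1 + aa k + 2 * c * bq k = 0 by rewrite aa_S; ring.
rewrite [aa k.+2]aa_S bq_S -[LHS]subr0 -(mulr0 (1 - 4 * c ^+ 2)) -h0; ring.
Qed.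
Lemma bq_rec k : bq k.+2 = (4 * c ^+ 2 - 2) * bq k.+1 - bq k.
Proof.
have h1 : bq k.+1 - (4 * c ^+ 2 - 1) * bq k - 2 * c * aa k = 0 by rewrite bq_S; ring.
rewrite [bq k.+2]bq_S aa_S -[LHS]subr0 -h1; ring.
Qed.
Lemma iter_m : iter (cm s t) wv v = v.
Proof.
have [ha hb] : ssum aa (cm s t) = 0 /\ ssum bq (cm s t) = 0.
  case: (ltngtP (cm s t) 2) => h.
  - by move: hm; rewrite ltnNge -ltnS h.
  - by split; apply: sum_zero3 => // k; [exact: aa_rec|exact: bq_rec].
  - have e := h; rewrite e /= aa_S bq_S e cc0_2; split; ring.
apply: functional_extensionality => r; rewrite iter_wv.
have h1 : forall j, -2 * (aa j + 2 * c * bq j) = (-2) * aa j + (-2 * 2 * c) * bq j by move=> j; ring.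
rewrite (ssum_ext _ h1) ssum_lin ssum_scale ha hb; ring.
Qed.
End Braid2.
End Geo.

Section Geo2.
Variable C : coxeter_system.
Local Open Scope ring_scope.

Lemma geo_rel (s t : cS C) : (0 < cm s t)%N ->
  gpow (@PGm (V C)) (@PG1 (V C)) (PGm (sigG s) (sigG t)) (cm s t) = PG1 (V C).
Proof.
move=> hpos; apply: PGext => p; rewrite PGf_pow.
case: (eqVneq s t) => hst.
  subst t; rewrite cm_diag /=; exact: sig_invol.
have hm : (1 < cm s t)%N by rewrite ltn_neqAle eq_sym cm_off.
exact: (iter_m hst hm p).
Qed.

Lemma beta_ev (s t : cS C) : beta s (ev t) = bb s t.
Proof.
have -> : ev t = fun r => (fun _ : cS C => 0 : algC) r + 1 * ev t r.
  by apply: functional_extensionality => r; rewrite add0r mul1r.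
rewrite beta_add /beta big1 ?add0r ?mul1r // => r _; by rewrite mulr0.
Qed.

Lemma gen_inj_geo (s t : cS C) : cgen s = cgen t -> s = t.
Proof.
move=> e; apply/eqP; apply: contraT => hst.
have [h [hM hg]] := @cuniversal C (PG (V C)) (@PGm _) (@PG1 _) (@PGi _) (@PG_group _) (@sigG C)
  (@geo_rel).
have e2 : sigG s = sigG t by rewrite -!hg e.
have e3 : sig s (ev s) s = sig t (ev s) s.
  by have := f_equal (fun a => PGf a (ev s) s) e2.
move: e3; rewrite /sig !beta_ev bb_diag /ev eqxx (negbTE hst).
rewrite !mulr0 addr0 !mulr1 => hh.
have h2 : - (2 : algC) = 0 by apply: (addrI 1); rewrite addr0.
by move: two_neq0; rewrite -oppr_eq0 h2 eqxx.
Qed.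
End Geo2.

Theorem mainTheorem11 (C : coxeter_system) (u v : cW C) :
  clt u v ->
  exists l : list (cW C),
    List.NoDup l /\
    (forall x, List.In x l <-> covers_in u v x) /\
    List.length l = #|Des (wup (supp u) v)|.
Proof.
move=> huv; exact: (main_count (@gen_inj_geo C) huv).
Qed.
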